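(* Let $L\ge1$ be an integer and $x_i(k)$, $i\in\mathbb Z$, $k\ge0$, real numbers. For each $i\in\mathbb Z$ and $j\in\{0,1,\dots,L\}$ define $z_{ij}(k)$ for integers $k$ as follows. If $k<j$, $z_{ij}(k)=0$. For each $s\ge j$ with $s\equiv j \pmod{L+1}$: $z_{ij}(s)=\frac{1}{2L+1}x_i(s)$; $z_{ij}(s+1)=z_{ij}(s)+z_{(i-1)j}(s)+z_{(i+1)j}(s)$; if $L\ge2$: $z_{ij}(s+2)=z_{ij}(s+1)+(z_{(i-1)j}(s+1)-z_{(i-1)j}(s))+(z_{(i+1)j}(s+1)-z_{(i+1)j}(s))-2z_{ij}(s)$; and for $3\le m\le L$: $z_{ij}(s+m)=z_{ij}(s+m-1)+(z_{(i-1)j}(s+m-1)-z_{(i-1)j}(s+m-2))+(z_{(i+1)j}(s+m-1)-z_{(i+1)j}(s+m-2))-(z_{ij}(s+m-2)-z_{ij}(s+m-3))$. (Thus each $z_{ij}(k)$, $k\ge j$, is determined by the cycle $s\le k\le s+L$ containing $k$.) For $k\ge0$ let $j_k\in\{0,\dots,L\}$ with $j_k\equiv k\pmod{L+1}$ and set $$y_i(k)=z_{ij_k}(k)+\sum_{l\in\{0,\dots,L\},\,l\neq j_k}\big(z_{il}(k)-z_{il}(k-1)\big).$$ Then for all $i$: if $k\le L$, $$y_i(k)=\frac{1}{2L+1}\Big(x_i(k)+\sum_{j=1}^{k}\big(x_{i-j}(k-j)+x_{i+j}(k-j)\big)\Big),$$ and if $k>L$, $$y_i(k)=\frac{1}{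2L+1}\Big(x_i(k)+\sum_{j=1}^{L}\big(x_{i-j}(k-j)+x_{i+j}(k-j)\big)\Big).$$
   Context: Sensors indexed by $i\in\mathbb Z$ on a line with time-varying measurements $x_i(k)$; sensor $i$ maintains an auxiliary vector $(z_{i0}(k),\dots,z_{iL}(k))$ and a consensus variable $y_i(k)$, and communicates only with sensors $i\pm1$. *)

(* Defs.v *)
From Stdlib Require Import Reals Lra Lia ZArith Arith List.
Open Scope R_scope.

Definition sumR (f : nat -> R) (l : list nat) : R :=
  fold_right (fun a acc => f a + acc) 0 l.

(* z j k i  represents  z_{ij}(k)  (j in 0..L, time k, sensor i). *)
(* y_i(k) = z_{i j_k}(k) + sum_{l in 0..L, l <> j_k} (z_{il}(k) - z_{il}(k-1)),
   with j_k = k mod (L+1).  For k = 0 the truncated k-1 = 0 is harmless,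
   since z_{il}(0) = 0 = z_{il}(-1) for l >= 1. *)
Definition yval (L : nat) (z : nat -> nat -> Z -> R) (i : Z) (k : nat) : R :=
  let jk := (k mod (L + 1))%nat in
  z jk k i +
  sumR (fun l => if Nat.eqb l jk then 0 else z l k i - z l (k - 1)%nat i)
       (seq 0 (L + 1)).

(* Main.v *)
Require Import Defs.
From Stdlib Require Import Reals Lra Lia ZArith Arith List Permutation.
Open Scope R_scope.

Lemma modeq (n a q r : nat) : (r < n)%nat -> a = (n * q + r)%nat -> (a mod n = r)%nat.
Proof. intros H1 H2. symmetry. eapply Nat.mod_unique; eauto. Qed.

Lemma sumR_ext_in (f g : nat -> R) (l : list nat) :
  (forall a, In a l -> f a = g a) -> sumR f l = sumR g l.
Proof.
  induction l as [|a l IH]; intros H; simpl; auto.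
  rewrite H by (left; auto). rewrite IH; auto. intros b Hb; apply H; right; auto.
Qed.

Lemma sumR_map (f : nat -> R) (s : nat -> nat) (l : list nat) :
  sumR (fun a => f (s a)) l = sumR f (map s l).
Proof. induction l; simpl; auto. rewrite IHl; auto. Qed.

Lemma sumR_perm (f : nat -> R) (l l' : list nat) :
  Permutation l l' -> sumR f l = sumR f l'.
Proof. intros H; induction H; simpl; try lra. Qed.

Lemma sumR_app (f : nat -> R) (l l' : list nat) :
  sumR f (l ++ l') = sumR f l + sumR f l'.
Proof. induction l; simpl; lra. Qed.

Lemma sumR_zero (l : list nat) : sumR (fun _ => 0) l = 0.
Proof. induction l; simpl; lra. Qed.

Lemma sumR_scale (c : R) (f : nat -> R) (l : list nat) :
  sumR (fun a => c * f a) l = c * sumR f l.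
Proof. induction l; simpl; [lra|]. rewrite IHl; lra. Qed.

Theorem theorem5 (L : nat) (HL : (1 <= L)%nat)
  (x : Z -> nat -> R) (z : nat -> nat -> Z -> R)
  (Hz0 : forall (i : Z) (j k : nat), (j <= L)%nat -> (k < j)%nat -> z j k i = 0)
  (Hz1 : forall (i : Z) (j s : nat), (j <= L)%nat -> (j <= s)%nat ->
     ((s - j) mod (L + 1) = 0)%nat ->
     z j s i = / INR (2 * L + 1) * x i s)
  (Hz2 : forall (i : Z) (j s : nat), (j <= L)%nat -> (j <= s)%nat ->
     ((s - j) mod (L + 1) = 0)%nat ->
     z j (s + 1)%nat i = z j s i + z j s (i - 1)%Z + z j s (i + 1)%Z)
  (Hz3 : forall (i : Z) (j s : nat), (j <= L)%nat -> (j <= s)%nat ->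
     ((s - j) mod (L + 1) = 0)%nat -> (2 <= L)%nat ->
     z j (s + 2)%nat i =
       z j (s + 1)%nat i
       + (z j (s + 1)%nat (i - 1)%Z - z j s (i - 1)%Z)
       + (z j (s + 1)%nat (i + 1)%Z - z j s (i + 1)%Z)
       - 2 * z j s i)
  (Hzm : forall (i : Z) (j s m : nat), (j <= L)%nat -> (j <= s)%nat ->
     ((s - j) mod (L + 1) = 0)%nat -> (3 <= m)%nat -> (m <= L)%nat ->
     z j (s + m)%nat i =
       z j (s + m - 1)%nat i
       + (z j (s + m - 1)%nat (i - 1)%Z - z j (s + m - 2)%nat (i - 1)%Z)
       + (z j (s + m - 1)%nat (i + 1)%Z - z j (s + m - 2)%nat (i + 1)%Z)
       - (z j (s + m - 2)%nat i - z j (s + m - 3)%nat i)) :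
  forall (i : Z) (k : nat),
    ((k <= L)%nat ->
      yval L z i k =
        / INR (2 * L + 1) *
        (x i k + sumR (fun j => x (i - Z.of_nat j)%Z (k - j)%nat
                              + x (i + Z.of_nat j)%Z (k - j)%nat) (seq 1 k)))
    /\
    ((L < k)%nat ->
      yval L z i k =
        / INR (2 * L + 1) *
        (x i k + sumR (fun j => x (i - Z.of_nat j)%Z (k - j)%nat
                              + x (i + Z.of_nat j)%Z (k - j)%nat) (seq 1 L))).
Proof.
  set (c := / INR (2 * L + 1)).
  assert (D : forall m, (1 <= m <= L)%nat -> forall j s i, (j <= L)%nat -> (j <= s)%nat ->
     ((s - j) mod (L + 1) = 0)%nat ->
     z j (s + m)%nat i - z j (s + m - 1)%nat i
       = c * (x (i - Z.of_nat m)%Z s + x (i + Z.of_nat m)%Z s)).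
  { intros m. induction m as [m IH] using lt_wf_ind. intros Hm j s i Hj Hs Hmod.
    destruct (Nat.eq_dec m 1) as [->|Hm1].
    { replace (s + 1 - 1)%nat with s by lia. rewrite Hz2 by auto.
      rewrite (Hz1 (i-1)%Z j s), (Hz1 (i+1)%Z j s) by auto. unfold c. simpl Z.of_nat. lra. }
    destruct (Nat.eq_dec m 2) as [->|Hm2].
    { replace (s + 2 - 1)%nat with (s+1)%nat by lia. rewrite Hz3 by (auto; lia).
      pose proof (IH 1%nat ltac:(lia) ltac:(lia) j s (i-1)%Z Hj Hs Hmod) as A.
      pose proof (IH 1%nat ltac:(lia) ltac:(lia) j s (i+1)%Z Hj Hs Hmod) as B.
      replace (s + 1 - 1)%nat with s in A, B by lia.
      rewrite (Hz1 i j s) by auto.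
      replace (i - 1 - Z.of_nat 1)%Z with (i - Z.of_nat 2)%Z in A by lia.
      replace (i - 1 + Z.of_nat 1)%Z with i in A by lia.
      replace (i + 1 - Z.of_nat 1)%Z with i in B by lia.
      replace (i + 1 + Z.of_nat 1)%Z with (i + Z.of_nat 2)%Z in B by lia.
      unfold c in *. lra. }
    rewrite Hzm by (auto; lia).
    pose proof (IH (m-1)%nat ltac:(lia) ltac:(lia) j s (i-1)%Z Hj Hs Hmod) as A.
    pose proof (IH (m-1)%nat ltac:(lia) ltac:(lia) j s (i+1)%Z Hj Hs Hmod) as B.
    pose proof (IH (m-2)%nat ltac:(lia) ltac:(lia) j s i Hj Hs Hmod) as C.
    replace (s + (m-1))%nat with (s+m-1)%nat in A, B by lia.
    replace (s + m - 1 - 1)%nat with (s+m-2)%nat in A, B by lia.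
    replace (s + (m-2))%nat with (s+m-2)%nat in C by lia.
    replace (s + m - 2 - 1)%nat with (s+m-3)%nat in C by lia.
    replace (i - 1 - Z.of_nat (m-1))%Z with (i - Z.of_nat m)%Z in A by lia.
    replace (i - 1 + Z.of_nat (m-1))%Z with (i + Z.of_nat m - 2)%Z in A by lia.
    replace (i + 1 - Z.of_nat (m-1))%Z with (i - Z.of_nat m + 2)%Z in B by lia.
    replace (i + 1 + Z.of_nat (m-1))%Z with (i + Z.of_nat m)%Z in B by lia.
    replace (i - Z.of_nat (m-2))%Z with (i - Z.of_nat m + 2)%Z in C by lia.
    replace (i + Z.of_nat (m-2))%Z with (i + Z.of_nat m - 2)%Z in C by lia.
    lra. }
  intros i k.
  set (H := fun j : nat => x (i - Z.of_nat j)%Z (k - j)%nat + x (i + Z.of_nat j)%Z (k - j)%nat).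
  set (F := fun m : nat => if Nat.eqb m 0 then 0 else if Nat.leb m k then c * H m else 0).
  set (sg := fun l : nat => ((k + (L + 1) - l) mod (L + 1))%nat).
  pose proof (Nat.div_mod_eq k (L+1)) as Hk.
  set (q := (k / (L+1))%nat) in *. set (r := (k mod (L+1))%nat) in *.
  assert (Hr : (r < L + 1)%nat) by (apply Nat.mod_upper_bound; lia).
  assert (Sg : forall l, (l < L + 1)%nat -> sg l = if Nat.leb l r then (r - l)%nat else (r + (L+1) - l)%nat).
  { intros l Hl. unfold sg. destruct (Nat.leb_spec l r).
    - apply modeq with (q := (q+1)%nat); lia.
    - apply modeq with (q := q); lia. }
  assert (T : forall l, (l < L + 1)%nat ->
     (if Nat.eqb l r then 0 else z l k i - z l (k - 1)%nat i) = F (sg l)).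
  { intros l Hl. rewrite Sg by auto. unfold F.
    destruct (Nat.eqb_spec l r) as [->|Hne].
    { rewrite Nat.leb_refl, Nat.sub_diag. reflexivity. }
    destruct (Nat.leb_spec l r).
    - replace (Nat.eqb (r - l) 0) with false by (symmetry; apply Nat.eqb_neq; lia).
      replace (Nat.leb (r - l) k) with true by (symmetry; apply Nat.leb_le; lia).
      set (m := (r - l)%nat).
      pose proof (D m ltac:(lia) l (k - m)%nat i ltac:(lia) ltac:(lia)
                    ltac:(apply modeq with (q := q); lia)) as E.
      replace (k - m + m)%nat with k in E by lia.
      replace (k - m + m - 1)%nat with (k - 1)%nat in E by lia.
      rewrite E. reflexivity.
    - replace (Nat.eqb (r + (L+1) - l) 0) with false by (symmetry; apply Nat.eqb_neq; lia).
      set (m := (r + (L+1) - l)%nat).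
      destruct (Nat.leb_spec l k).
      + assert (Hq : (1 <= q)%nat) by (destruct q; [rewrite Nat.mul_0_r in Hk|]; lia).
        assert (Hm : m = (r + (L+1) - l)%nat) by reflexivity; clearbody m.
        assert (Hk2 : (L + 1 + r <= k)%nat) by nia.
        replace (Nat.leb m k) with true by (symmetry; apply Nat.leb_le; lia).
        pose proof (D m ltac:(lia) l (k - m)%nat i ltac:(lia) ltac:(lia)
                      ltac:(apply modeq with (q := (q-1)%nat); [lia | rewrite Nat.mul_sub_distr_l; lia])) as E.
        replace (k - m + m)%nat with k in E by lia.
        replace (k - m + m - 1)%nat with (k - 1)%nat in E by lia.
        rewrite E. reflexivity.
      + assert (Hkr : k = r) by (destruct q; [rewrite Nat.mul_0_r in Hk; lia| nia]).
        replace (Nat.leb m k) with false by (symmetry; apply Nat.leb_gt; lia).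
        rewrite (Hz0 i l k), (Hz0 i l (k-1)%nat) by lia. lra. }
  assert (Sum : sumR (fun l => if Nat.eqb l r then 0 else z l k i - z l (k - 1)%nat i)
                     (seq 0 (L + 1)) = sumR F (seq 1 L)).
  { rewrite (sumR_ext_in _ (fun l => F (sg l))).
    2:{ intros a Ha. apply in_seq in Ha. apply T. lia. }
    rewrite sumR_map. rewrite <- (sumR_perm F (seq 0 (L+1))).
    - replace (L + 1)%nat with (S L) by lia. simpl. unfold F at 1. simpl. lra.
    - apply NoDup_Permutation_bis.
      + apply seq_NoDup.
      + rewrite length_map. lia.
      + intros y Hy. apply in_seq in Hy. apply in_map_iff.
        destruct (Nat.leb_spec y r).
        * exists (r - y)%nat. split.
          -- rewrite Sg by lia. replace (Nat.leb (r - y) r) with true by (symmetry; apply Nat.leb_le; lia). lia.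
          -- apply in_seq. lia.
        * exists (r + (L+1) - y)%nat. split.
          -- rewrite Sg by lia. replace (Nat.leb (r + (L+1) - y) r) with false by (symmetry; apply Nat.leb_gt; lia). lia.
          -- apply in_seq. lia. }
  assert (Y : yval L z i k = c * x i k + sumR F (seq 1 L)).
  { unfold yval. fold r. rewrite Sum. rewrite (Hz1 i r k) by (try lia; apply modeq with (q := q); lia).
    reflexivity. }
  split; intros Hkl; rewrite Y; fold H.
  - replace (seq 1 L) with (seq 1 k ++ seq (1 + k) (L - k)) by (rewrite <- seq_app; f_equal; lia).
    rewrite sumR_app.
    rewrite (sumR_ext_in F (fun _ => 0) (seq (1 + k) (L - k))).
    2:{ intros a Ha. apply in_seq in Ha. unfold F.
        replace (Nat.eqb a 0) with false by (symmetry; apply Nat.eqb_neq; lia).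
        replace (Nat.leb a k) with false by (symmetry; apply Nat.leb_gt; lia). reflexivity. }
    rewrite sumR_zero.
    rewrite (sumR_ext_in F (fun a => c * H a)).
    2:{ intros a Ha. apply in_seq in Ha. unfold F.
        replace (Nat.eqb a 0) with false by (symmetry; apply Nat.eqb_neq; lia).
        replace (Nat.leb a k) with true by (symmetry; apply Nat.leb_le; lia). reflexivity. }
    rewrite sumR_scale. lra.
  - rewrite (sumR_ext_in F (fun a => c * H a)).
    2:{ intros a Ha. apply in_seq in Ha. unfold F.
        replace (Nat.eqb a 0) with false by (symmetry; apply Nat.eqb_neq; lia).
        replace (Nat.leb a k) with true by (symmetry; apply Nat.leb_le; lia). reflexivity. }
    rewrite sumR_scale. lra.
Qed.
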